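(* Assume (h) and (R-q) with $q=4$, and fix $h\in(0,h_0]$. (i) Let $p\ge4$ and let $(R_t)_{t\in\pi_h}$ be an $(\mathcal F_t)$-adapted sequence in $L^p$ with $\sup_{t\in\pi_h}\|1_{\{t\le\tau_h\}}R_t\|_{L^p}<\infty$. Then the sequence $(1_{\{t\le\tau_h\}}R_t)_{t\in\pi_h}$ belongs to $\mathcal V(\tau_h)$ and has finite norm $\|\cdot\|_{\tau_h}$. (ii) Every $S\in\mathcal V(\tau_h)$ with $\|S\|_{\tau_h}<\infty$ satisfies $\big(\frac1{1-3L_fh}\big)^{t/h}1_{\{t\le\tau_h\}}S_t^2\to0$ in $L^1$ as $t\to\infty$, $t\in\pi_h$.
   Context: $(\Omega,\mathcal F,(\mathcal F_t)_{t\ge0},\mathbb P)$ is a filtered probability space whose filtration is generated by a $d$-dimensional Brownian motion, augmented by null sets. $\tau$ is a stopping time and $L_f>0$ a constant. For $h>0$, $\pi_h=\{nh:n\in\mathbb N_0\}$, and for each $h\in(0,h_0]$ a finite $\pi_h$-valued stopping time $\tau_h$ is given. $\mathcal V(\tau_h)$ is the set of sequences $(R_t)_{t\in\pi_h}$ with $R_t\in L^2(\mathcal F_t)$ and $1_{\{t>\tau_h\}}R_t=0$ for all $t\in\pi_h$, with $\|R\|_{\tau_h}=\sum_{t\in\pi_h}\varphi(t)\|1_{\{t\le\tau_h\}}R_t\|_{L^2}$, $\varphi(t)=(1-3L_fh)^{-t/h}$. Assumptions: (h) $h_0<\min\{L_f,\frac1{12L_f}\}$ and $h\in(0,h_0]$.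 (R-q) for a parameter $q\ge2$: there is $\rho>4qL_f$ with $\exp(\rho\tau)\in L^1$ and $\sup_{h\in(0,h_0]}\exp(\rho\tau_h)\in L^1$. *)

(* Defs.v *)
From HB Require Import structures.
From mathcomp Require Import all_boot all_order all_algebra.
From mathcomp Require Import all_classical all_reals all_analysis.
Set Implicit Arguments. Unset Strict Implicit. Unset Printing Implicit Defensive.
Import Order.TTheory GRing.Theory Num.Theory.
Import numFieldNormedType.Exports.
Local Open Scope classical_set_scope.
Local Open Scope ring_scope.

Section defs.
Context {d : measure_display} {Omega : measurableType d} {R : realType}.

Definition is_filtration (F : R -> set (set Omega)) : Prop :=
  (forall t, 0 <= t -> sigma_algebra setT (F t)) /\
  (forall t, 0 <= t -> F t `<=` measurable) /\
  (forall s t, 0 <= s -> s <= t -> F s `<=` F t).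

Definition Gmeasurable (G : set (set Omega)) (f : Omega -> R) : Prop :=
  forall B : set R, measurable B -> G (f @^-1` B).

Definition stopping_time (F : R -> set (set Omega)) (tau : Omega -> \bar R) :=
  (forall w, (0 <= tau w)%E) /\
  (forall t, 0 <= t -> F t [set w | (tau w <= t%:E)%E]).

Definition finite_stopping_time (F : R -> set (set Omega)) (tau : Omega -> R) :=
  (forall w, 0 <= tau w) /\
  (forall t, 0 <= t -> F t [set w | tau w <= t]).

Definition pi_valued (h : R) (tau : Omega -> R) :=
  forall w, exists n : nat, tau w = n%:R * h.

Definition inLp (P : probability Omega R) (p : R) (f : Omega -> R) : Prop :=
  measurable_fun setT f /\ ('N[P]_(p%:E)[EFin \o f] < +oo)%E.

Definition phi (Lf h t : R) : R := powR ((1 - 3 * Lf * h)^-1) (t / h).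

Definition ind (tau : Omega -> R) (t : R) (w : Omega) : R := if t <= tau w then 1 else 0.

Definition tgrid (h : R) (n : nat) : R := n%:R * h.

(* membership of (S_t)_{t in pi_h} (indexed by n, t = n h) in V(tau_h) *)
Definition in_V (P : probability Omega R) (F : R -> set (set Omega)) (h : R)
    (tau : Omega -> R) (S : nat -> Omega -> R) : Prop :=
  forall n : nat,
    Gmeasurable (F (tgrid h n)) (S n) /\ inLp P 2 (S n) /\
    {ae P, forall w, tgrid h n > tau w -> S n w = 0}.

Definition normV (P : probability Omega R) (Lf h : R) (tau : Omega -> R)
    (S : nat -> Omega -> R) : \bar R :=
  (\sum_(0 <= n <oo)
     ((phi Lf h (tgrid h n))%:E *
      'N[P]_(2%:E)[EFin \o (fun w => (ind tau (tgrid h n) w * S n w)%R)]))%E.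

End defs.

(* Main.v *)
Require Import Defs.
From HB Require Import structures.
From mathcomp Require Import all_boot all_order all_algebra.
From mathcomp Require Import all_classical all_reals all_analysis.
From mathcomp Require Import ring lra.
From mathcomp Require Import measurable_realfun.
Import Order.TTheory GRing.Theory Num.Theory.
Import numFieldNormedType.Exports.
Local Open Scope classical_set_scope.
Local Open Scope ring_scope.
Section sa.
Context {T : Type} (G : set (set T)) (HG : sigma_algebra setT G).
Lemma saC A : G A -> G (~` A).
Proof. by case: HG => _ HC _ /HC; rewrite setTD. Qed.
Lemma saT : G setT.
Proof. by rewrite -setC0; apply: saC; case: HG. Qed.
Lemma saU A B : G A -> G B -> G (A `|` B).
Proof. move=> GA GB; case: HG => H0 _ HU; rewrite -bigcup2E; apply: HU => -[|[|n]] //=. Qed.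
Lemma saI A B : G A -> G B -> G (A `&` B).
Proof. by move=> GA GB; rewrite -[A `&` B]setCK setCI; apply/saC/saU; apply: saC. Qed.
End sa.

Section gm.
Context {d : measure_display} {Omega : measurableType d} {R : realType}.
Implicit Types (G : set (set Omega)) (f : Omega -> R).

Lemma Gmeas_meas G f : G `<=` measurable -> Gmeasurable G f -> measurable_fun setT f.
Proof. by move=> GM Gf _ B mB; rewrite setTI; apply/GM/Gf. Qed.

Lemma Gmeas_ind G f (tau : Omega -> R) t : sigma_algebra setT G ->
  G [set w | t <= tau w] -> Gmeasurable G f -> Gmeasurable G (fun w => ind tau t w * f w).
Proof.
move=> HG GA Gf B mB.
have -> : (fun w => ind tau t w * f w) @^-1` B =
  ([set w | t <= tau w] `&` f @^-1` B) `|`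
  (~` [set w | t <= tau w] `&` (if pselect (B 0) then setT else set0)).
  apply/seteqP; split => w /=; rewrite /ind.
  - case: ifPn => tw; first by rewrite mul1r => Bw; left.
    by rewrite mul0r => B0; right; split => //; case: pselect.
  - case=> -[tw Bw].
      by rewrite ifT//= mul1r.
    by rewrite ifF ?mul0r; [case: pselect Bw | apply/negbTE/negP].
apply: saU => //; apply: saI => //; first exact: Gf.
  exact: saC.
by case: (pselect (B 0)) => ?; [apply: saT | case: HG].
Qed.

Lemma Gmeas_cst G (c : R) : sigma_algebra setT G -> Gmeasurable G (fun _ => c).
Proof.
move=> HG B mB; have [Bc|Bc] := pselect (B c).
  have -> : (fun _ : Omega => c) @^-1` B = setT by apply/seteqP; split => w.
  exact: saT.
have -> : (fun _ : Omega => c) @^-1` B = set0 by apply/seteqP; split => w.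
by case: HG.
Qed.

Lemma An_in (F : R -> set (set Omega)) (tau : Omega -> R) h n :
  is_filtration F -> 0 < h -> pi_valued h tau -> finite_stopping_time F tau ->
  F (tgrid h n) [set w | tgrid h n <= tau w].
Proof.
move=> [Fsa [FM Fmon]] h0 piv [tau0 tauF].
have tg0 k : 0 <= tgrid h k by rewrite /tgrid mulr_ge0// ltW.
case: n => [|k].
  have -> : [set w | tgrid h 0 <= tau w] = setT.
    by apply/seteqP; split => w //= _; rewrite /tgrid mul0r.
  apply: saT; apply: Fsa; exact: tg0.
have -> : [set w | tgrid h k.+1 <= tau w] = ~` [set w | tau w <= tgrid h k].
  apply/seteqP; split => w /=; have [m ->] := piv w; rewrite /tgrid !ler_pM2r// !ler_nat.
    by move=> km mk; have := leq_trans km mk; rewrite ltnn.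
  by move/negP; rewrite -ltnNge.
apply: saC; first by apply: Fsa; exact: tg0.
apply: (Fmon (tgrid h k)); [exact: tg0 | | exact: tauF].
by rewrite /tgrid ler_pM2r// ler_nat.
Qed.
End gm.
Section key.
Context {d : measure_display} {Omega : measurableType d} {R : realType}.
Variable P : probability Omega R.
Local Open Scope ereal_scope.

Lemma poweR2 (x : \bar R) : 0 <= x -> x `^ 2 = x * x.
Proof.
case: x => [r||] //= r0.
  by rewrite powR_mulrn -?lee_fin// -EFinM expr2.
by rewrite pnatr_eq0 mulyy.
Qed.

Lemma key (X g : Omega -> R) (p M D : R) :
  measurable_fun setT X -> measurable_fun setT g ->
  (forall w, g w = 0%R \/ g w = 1%R) -> (forall w, X w = g w * X w)%R -> (4 <= p)%R ->
  'N[P]_p%:E[EFin \o X] <= M%:E -> \int[P]_w (g w)%:E <= D%:E ->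
  'N[P]_2%:E[EFin \o X] <= (M * D `^ (4^-1))%:E.
Proof.
move=> mX mg g01 XgX p4 HM HD.
have p0 : (0 < p)%R by lra.
have p2 : (0 < p - 2)%R by lra.
pose a := (p / 2)%R; pose b := (p / (p - 2))%R.
have a0 : (0 < a)%R by rewrite divr_gt0.
have b0 : (0 < b)%R by rewrite divr_gt0.
have ab : (a^-1 + b^-1 = 1)%R.
  rewrite /a /b !invf_div; field; by rewrite gt_eqF.
have mX2 : measurable_fun setT (fun w => X w ^+ 2)%R.
  by under eq_fun do rewrite expr2; apply: measurable_realfun.measurable_funM.
have H := hoelder P mX2 mg a0 b0 ab.
have X2g w : (X w ^+ 2 * g w = X w ^+ 2)%R.
  by case: (g01 w) => gw; rewrite gw ?mulr1// mulr0; rewrite XgX gw mul0r expr2 mulr0.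
have EL : 'N[P]_1[EFin \o ((fun w => X w ^+ 2) \* g)%R] = 'N[P]_2%:E[EFin \o X] `^ 2.
  rewrite Lnorm1 poweR_Lnorm//; apply: eq_integral => w _.
  by rewrite /= X2g powR_mulrn// normrX.
have EA : 'N[P]_a%:E[EFin \o (fun w => X w ^+ 2)%R] = 'N[P]_p%:E[EFin \o X] `^ 2.
  rewrite unlock /= -poweRrM; congr (_ `^ _); last first.
    by rewrite /a invf_div; field; rewrite gt_eqF.
  apply: eq_integral => w _; rewrite /= ?abse_EFin ?poweR_EFin normrX -powR_mulrn//.
  by rewrite -powRrM /a mulrC divfK.
have EB : 'N[P]_b%:E[EFin \o g] = (\int[P]_w (g w)%:E) `^ b^-1.
  rewrite unlock /=; congr (_ `^ _); apply: eq_integral => w _.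
  rewrite /= ?abse_EFin ?poweR_EFin; case: (g01 w) => ->; rewrite ?normr0 ?normr1.
    by rewrite powR0// gt_eqF.
  by rewrite powR1.
rewrite EL EA EB in H.
have I0 : 0 <= \int[P]_w (g w)%:E.
  by apply: integral_ge0 => w _; case: (g01 w) => ->.
have I1 : \int[P]_w (g w)%:E <= 1.
  apply: (@le_trans _ _ (\int[P]_w (cst 1%E w))).
    apply: ge0_le_integral => //; first by move=> w ?; case: (g01 w) => ->.
      by apply/measurable_realfun.measurable_EFinP.
    by move=> w ?; case: (g01 w) => ->.
  by rewrite integral_cst// mul1e; have := probability_setT P; rewrite /= => ->.
have Ifin : \int[P]_w (g w)%:E \is a fin_num.
  by rewrite ge0_fin_numE// (le_lt_trans I1 (ltry _)).
move: I0 I1 HD H; rewrite -(fineK Ifin); set i := fine _ => I0 I1 HD H.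
rewrite lee_fin in I0; rewrite lee_fin in I1; rewrite lee_fin in HD.
have N0 := Lnorm_ge0 P p%:E (EFin \o X).
have Nfin : 'N[P]_p%:E[EFin \o X] \is a fin_num.
  by rewrite ge0_fin_numE// (le_lt_trans HM (ltry _)).
move: N0 HM H; rewrite -(fineK Nfin); set m := fine _ => N0 HM H.
rewrite lee_fin in N0; rewrite lee_fin in HM.
have M0 : (0 <= M)%R by apply: le_trans HM.
have D0 : (0 <= D)%R by apply: le_trans HD.
rewrite !poweR_EFin -EFinM in H.
have ib : (i `^ b^-1 <= D `^ 2^-1)%R.
  apply: (@le_trans _ _ (i `^ 2^-1)%R).
    have [->|ip] := eqVneq i 0%R.
      by rewrite powR0 ?invr_neq0 ?gt_eqF// powR_ge0.
    apply: ger_powR; first by rewrite lt0r ip I0.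
    rewrite /b invf_div ler_pdivlMr//; lra.
  by apply: ge0_ler_powR => //; rewrite nnegrE.
have H2 : 'N[P]_2%:E[EFin \o X] `^ 2 <= (M ^+ 2 * D `^ 2^-1)%:E.
  apply: (le_trans H); rewrite lee_fin powR_mulrn//.
  apply: ler_pM => //; [exact: sqr_ge0 | exact: powR_ge0 | by rewrite lerXn2r ?nnegrE].
have N2fin : 'N[P]_2%:E[EFin \o X] \is a fin_num.
  rewrite ge0_fin_numE ?Lnorm_ge0//; apply: (@lty_poweRy _ _ 2) => //.
  exact: (le_lt_trans H2 (ltry _)).
move: H2; rewrite -(fineK N2fin); set n := fine _ => H2.
have n0 : (0 <= n)%R by rewrite -lee_fin fineK// Lnorm_ge0.
rewrite poweR_EFin lee_fin powR_mulrn// in H2.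
rewrite lee_fin -(ler_pXn2r (_ : (0 < 2)%N))// ?nnegrE; last first.
  by apply: mulr_ge0 => //; exact: powR_ge0.
rewrite exprMn.
have -> : ((D `^ 4^-1) ^+ 2 = D `^ 2^-1)%R.
  rewrite -powR_mulrn ?powR_ge0// -powRrM; congr (_ `^ _)%R; field.
all: done.
Qed.
End key.

Section more.
Context {d : measure_display} {Omega : measurableType d} {R : realType}.
Variable P : probability Omega R.
Local Open Scope ereal_scope.

Lemma markov_ind (tau : Omega -> R) (G : Omega -> \bar R) (rho t : R) :
  (0 <= rho)%R -> measurable_fun setT G ->
  (forall w, (expR (rho * tau w))%:E <= G w) ->
  measurable_fun setT (ind tau t) ->
  \int[P]_w (ind tau t w)%:E <= (expR (- (rho * t)))%:E * \int[P]_w G w.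
Proof.
move=> rho0 mG HG mi.
have G0 w : 0 <= G w by apply: le_trans (HG w); rewrite lee_fin expR_ge0.
rewrite -ge0_integralZl_EFin//.
apply: ge0_le_integral => //.
- by move=> w ?; rewrite /ind; case: (t <= tau w)%R; rewrite ?lee01 ?lexx.
- by apply/measurable_EFinP.
- by apply: emeasurable_funM.
move=> w ?; rewrite /ind; case: ifPn => tw; last by apply: mule_ge0; [rewrite lee_fin expR_ge0 | exact: G0].
apply: (@le_trans _ _ ((expR (- (rho * t)))%:E * (expR (rho * tau w))%:E)); last first.
  by rewrite lee_pmul2l// ?lte_fin ?expR_gt0.
rewrite -EFinM -expRD lee_fin; apply: le_trans (expR_ge1Dx _).
by rewrite lerDl addrC subr_ge0; apply: ler_wpM2l.
Qed.

Lemma geom_lt (K q : R) : (0 <= q < 1)%R ->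
  \sum_(0 <= n <oo) (K * q ^+ n)%:E < +oo.
Proof.
move=> /andP[q0 q1].
have cv : (fun N => \sum_(0 <= n < N) ((K * q ^+ n)%:E)) @ \oo --> (K / (1 - q))%:E.
  apply: cvg_EFin; first by apply: nearW => N; rewrite sumEFin.
  rewrite (_ : _ \o _ = series (geometric K q)).
    by apply: cvg_geometric_series; rewrite ger0_norm.
  by apply/funext => N /=; rewrite sumEFin.
by rewrite (cvg_lim _ cv)// ltry.
Qed.

Lemma part2 (a b : nat -> \bar R) : (forall n, 0 <= a n) -> (forall n, 0 <= b n) ->
  (forall n, b n <= a n * a n) -> \sum_(0 <= n <oo) a n < +oo -> b @ \oo --> 0.
Proof.
move=> a0 b0 ba sa.
have tl := @nneseries_tail_cvg R a xpredT sa (fun k _ => a0 k).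
have ac : a @ \oo --> 0.
  apply: (@squeeze_cvge _ _ _ _ (cst 0) _ _ _ _ (cvg_cst _) tl).
  apply: nearW => n; rewrite a0 /=.
  by have := @nneseries_lim_ge R a xpredT n n.+1 (fun k _ _ => a0 k); rewrite big_nat1.
have aa : (fun n => a n * a n) @ \oo --> 0 * 0 by apply: cvgeM.
rewrite mule0 in aa.
apply: (@squeeze_cvge _ _ _ _ (cst 0) _ _ _ _ (cvg_cst _) aa).
by apply: nearW => n; rewrite b0 ba.
Qed.
End more.

Lemma expR_powR (R : realType) (x y : R) : expR x `^ y = expR (y * x).
Proof. by rewrite /powR gt_eqF ?expR_gt0// expRK. Qed.

Lemma phiE (R : realType) (Lf h : R) n : 0 < h -> 0 < 1 - 3 * Lf * h ->
  phi Lf h (tgrid h n) = ((1 - 3 * Lf * h)^-1) ^+ n.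
Proof.
by move=> h0 u0; rewrite /phi /tgrid mulfK ?gt_eqF// powR_mulrn// invr_ge0 ltW.
Qed.

Theorem mainTheorem12 (d : measure_display) (Omega : measurableType d)
  (R : realType) (P : probability Omega R) (F : R -> set (set Omega))
  (tau : Omega -> \bar R) (tauh : R -> Omega -> R) (Lf h0 rho h : R) :
  is_filtration F ->
  stopping_time F tau ->
  (forall h', 0 < h' <= h0 ->
     pi_valued h' (tauh h') /\ finite_stopping_time F (tauh h')) ->
  0 < Lf ->
  (* (h) *)
  0 < h0 -> h0 < Lf -> h0 < (12 * Lf)^-1 -> 0 < h <= h0 ->
  (* (R-q) with q = 4 *)
  4 * 4 * Lf < rho ->
  P.-integrable setT (fun w => expeR (rho%:E * tau w)%E) ->
  P.-integrable setT
    (fun w => ereal_sup [set (expR (rho * tauh h' w))%:E | h' in `]0, h0]]) ->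
  (* (i) *)
  (forall (p : R) (Rs : nat -> Omega -> R),
     4 <= p ->
     (forall n, Gmeasurable (F (tgrid h n)) (Rs n)) ->
     (forall n, inLp P p (Rs n)) ->
     (exists M : R, forall n,
        ('N[P]_(p%:E)[EFin \o (fun w => (ind (tauh h) (tgrid h n) w * Rs n w)%R)]
          <= M%:E)%E) ->
     let S := fun n w => ind (tauh h) (tgrid h n) w * Rs n w in
     in_V P F h (tauh h) S /\ (normV P Lf h (tauh h) S < +oo)%E)
  /\
  (* (ii) *)
  (forall S : nat -> Omega -> R,
     in_V P F h (tauh h) S -> (normV P Lf h (tauh h) S < +oo)%E ->
     (fun n : nat => ('N[P]_(1%:E)[EFin \o (fun w =>
         (phi Lf h (tgrid h n) * ind (tauh h) (tgrid h n) w * S n w ^+ 2)%R)])%E)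
       @ \oo --> 0%E).
Proof.
move=> Hfil Hst Htauh Lf0 h00 h0Lf h012 /andP[hpos hh0] rhoL intTau intSup.
have [piv fst] := Htauh h (introT andP (conj hpos hh0)).
set T := tauh h.
have tg0 n : 0 <= tgrid h n by rewrite /tgrid mulr_ge0// ltW.
have gA n : F (tgrid h n) [set w | tgrid h n <= T w] by exact: An_in.
have FM n : F (tgrid h n) `<=` measurable by case: Hfil => _ [FM _]; apply: FM.
have Fsa n : sigma_algebra setT (F (tgrid h n)) by case: Hfil => Fsa _; apply: Fsa.
have ind01 n w : ind T (tgrid h n) w = 0 \/ ind T (tgrid h n) w = 1.
  by rewrite /ind; case: ifP; [right|left].
have Gind n : Gmeasurable (F (tgrid h n)) (ind T (tgrid h n)).
  have := Gmeas_ind _ _ _ _ (Fsa n) (gA n) (Gmeas_cst _ 1 (Fsa n)).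
  by rewrite (_ : (fun w => _) = ind T (tgrid h n))//; apply/funext => w; rewrite mulr1.
have mind n : measurable_fun setT (ind T (tgrid h n)) by exact: Gmeas_meas _ _ (FM n) (Gind n).
have u0 : 0 < Lf * h by rewrite mulr_gt0.
have u12 : 12 * (Lf * h) < 1.
  have k : (12 * Lf) * h0 < 1.
    have p12 : 0 < 12 * Lf by rewrite mulr_gt0.
    by move: h012; rewrite -(ltr_pM2l p12) mulfV// gt_eqF.
  apply: le_lt_trans k; rewrite mulrA ler_pM2l// mulr_gt0//.
have a0pos : 0 < 1 - 3 * Lf * h by rewrite -mulrA; lra.
have rho0 : 0 <= rho by apply: ltW; apply: le_lt_trans rhoL; rewrite !mulr_ge0// ltW.
pose Gs := fun w => ereal_sup [set (expR (rho * tauh h' w))%:E | h' in `]0, h0]].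
have HG w : ((expR (rho * T w))%:E <= Gs w)%E.
  by apply: ereal_sup_ubound; exists h => //; rewrite /= in_itv /= hpos hh0.
have /integrableP [mGs Gsfin] := intSup.
have Gs0 w : (0 <= Gs w)%E by apply: le_trans (HG w); rewrite lee_fin expR_ge0.
have IGs : (\int[P]_w Gs w = \int[P]_w `|Gs w|)%E.
  by apply: eq_integral => w _; rewrite gee0_abs.
have Cfin : (\int[P]_w Gs w)%E \is a fin_num.
  by rewrite ge0_fin_numE ?integral_ge0// IGs.
set C := fine (\int[P]_w Gs w)%E.
have CE : (\int[P]_w Gs w)%E = C%:E by rewrite fineK.
have C0 : 0 <= C by rewrite -lee_fin -CE integral_ge0.
have Mk n : (\int[P]_w (ind T (tgrid h n) w)%:E <= (C * expR (- (rho * tgrid h n)))%:E)%E.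
  by rewrite mulrC EFinM -CE; apply: markov_ind.
have phi1 n : 1 <= phi Lf h (tgrid h n).
  by rewrite phiE// exprn_ege1// invf_ge1// -mulrA; lra.
have phi0 n : 0 <= phi Lf h (tgrid h n) by apply: le_trans (phi1 n).
split.
  move=> p Rs p4 HGm HLp [M HM] S.
  have mRs n : measurable_fun setT (Rs n) by case: (HLp n).
  have mS n : measurable_fun setT (S n) by apply: measurable_realfun.measurable_funM.
  have indS n w : ind T (tgrid h n) w * S n w = S n w.
    by rewrite /S; case: (ind01 n w) => ->; rewrite ?mul0r ?mul1r.
  have bound n : ('N[P]_2%:E[EFin \o S n] <=
      (M * (C * expR (- (rho * tgrid h n))) `^ 4^-1)%:E)%E.
    have XgX w : S n w = ind T (tgrid h n) w * S n w by rewrite indS.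
    exact: (key P (S n) (ind T (tgrid h n)) p M (C * expR (- (rho * tgrid h n)))
      (mS n) (mind n) (ind01 n) XgX p4 (HM n) (Mk n)).
  split.
    move=> n; split; first exact: Gmeas_ind.
    split; first by split => //; apply: le_lt_trans (bound n) (ltry _).
    apply: aeW => w hw; rewrite /S /ind ifF ?mul0r//.
    by apply/negbTE; rewrite -ltNge.
  rewrite /normV.
  pose E := expR (- (4^-1 * (rho * h))).
  pose q := (1 - 3 * Lf * h)^-1 * E.
  have q01 : 0 <= q < 1.
    apply/andP; split; first by rewrite mulr_ge0 ?expR_ge0// invr_ge0 ltW.
    rewrite /q /E expRN -invfM invf_lt1; last by rewrite mulr_gt0// expR_gt0.
    have ex := expR_ge1Dx (4^-1 * (rho * h)).
    have rh : 4 * (Lf * h) < 4^-1 * (rho * h) by nra.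
    move: ex rh a0pos u12 u0; rewrite -mulrA.
    set e := expR _; set y := 4^-1 * _; set u := Lf * h; nra.
  apply: (le_lt_trans _ (geom_lt (M * C `^ 4^-1) q q01)).
  apply: lee_nneseries => [i _ _ | n _].
    by rewrite mule_ge0 ?lee_fin ?phi0 ?Lnorm_ge0.
  rewrite (_ : (EFin \o _) = EFin \o S n); last first.
    by apply/funext => w /=; rewrite indS.
  apply: le_trans (lee_wpmul2l _ (bound n)) _; first by rewrite lee_fin phi0.
  rewrite -EFinM lee_fin phiE// powRM ?expR_ge0// expR_powR.
  have -> : 4^-1 * - (rho * tgrid h n) = n%:R * (- (4^-1 * (rho * h))).
    by rewrite /tgrid; ring.
  rewrite expRM_natl le_eqVlt; apply/orP; left; apply/eqP.
  by rewrite /q exprMn; ring.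
move=> S HV; rewrite /normV => Hn.
apply: (part2 _ _ _ _ _ Hn).
- by move=> n; rewrite mule_ge0 ?lee_fin ?phi0 ?Lnorm_ge0.
- by move=> n; rewrite Lnorm_ge0.
move=> n /=.
have [HGn [[mSn _] _]] := HV n.
set g := ind T (tgrid h n); set ph := phi Lf h (tgrid h n).
pose Y := fun w => g w * S n w.
have mY : measurable_fun setT Y := measurable_realfun.measurable_funM (mind n) mSn.
have mY2 : measurable_fun setT (fun w => Y w ^+ 2).
  by under eq_fun do rewrite expr2; apply: measurable_realfun.measurable_funM.
have bE : ('N[P]_1[EFin \o (fun w => (ph * g w * S n w ^+ 2)%R)] =
    ph%:E * \int[P]_w (Y w ^+ 2)%R%:E)%E.
  rewrite Lnorm1 -ge0_integralZl_EFin//; try by [apply/measurable_EFinP | move=> w _; rewrite lee_fin sqr_ge0 | exact: phi0].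
  apply: eq_integral => w _ /=; rewrite /Y -EFinM; congr (_%:E).
  rewrite /g; case: (ind01 n w) => ->; first by rewrite mulr0 mul0r normr0; ring.
  by rewrite mulr1 mul1r ger0_norm// mulr_ge0 ?sqr_ge0// /ph.
have NE : ('N[P]_2%:E[EFin \o Y] `^ 2 = \int[P]_w (Y w ^+ 2)%R%:E)%E.
  rewrite poweR_Lnorm//; apply: eq_integral => w _ /=.
  by rewrite powR_mulrn// real_normK// num_real.
rewrite bE -NE poweR2 ?Lnorm_ge0// muleACA.
apply: lee_wpmul2r; first by rewrite mule_ge0 ?Lnorm_ge0.
by rewrite -EFinM lee_fin; have := phi1 n; rewrite -/ph; nra.
Qed.
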